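(* Let $P$ be an order having at least one maximum chain. If $P$ has a relatively maximum full trunk $R$, then $R$ is the union of all maximum chains of $P$. Moreover, $P$ has a relatively maximum full trunk if and only if the union of all maximum chains of $P$ is a trunk.
   Context: Orders are partial orders; $x\sim y$ means $x\ne y$ and $x,y$ incomparable. A trunk of $P$ is a subset $T$ (with the induced order) such that for all pairwise distinct $x,y,z\in T$, $x\sim y$ and $y\sim z$ imply $x\sim z$. A chain of $P$ is maximum if it is maximal under inclusion and no chain of $P$ has greater cardinality. A full trunk is a trunk containing at least one maximum chain of $P$. A relatively maximum full trunk is a full trunk that is the unique full trunk of $P$ maximal under inclusion. *)

(* Defs.v *)
From Stdlib Require Import Classical.

Set Implicit Arguments.

Section Orders.
Variable T : Type.
Variable le : T -> T -> Prop.

Definition is_order : Prop :=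
  (forall x, le x x) /\
  (forall x y, le x y -> le y x -> x = y) /\
  (forall x y z, le x y -> le y z -> le x z).

Definition incomp (x y : T) : Prop := x <> y /\ ~ le x y /\ ~ le y x.

Definition subset (A B : T -> Prop) : Prop := forall x, A x -> B x.
Definition same_set (A B : T -> Prop) : Prop := forall x, A x <-> B x.

Definition trunk (R : T -> Prop) : Prop :=
  forall x y z, R x -> R y -> R z -> x <> y -> y <> z -> x <> z ->
    incomp x y -> incomp y z -> incomp x z.

Definition chain (C : T -> Prop) : Prop :=
  forall x y, C x -> C y -> le x y \/ le y x.

Definition maximal_chain (C : T -> Prop) : Prop :=
  chain C /\ (forall D, chain D -> subset C D -> subset D C).

Definition card_le (A B : T -> Prop) : Prop :=
  exists f : {x | A x} -> {x | B x}, forall a b, f a = f b -> a = b.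
Definition card_lt (A B : T -> Prop) : Prop := card_le A B /\ ~ card_le B A.

Definition maximum_chain (C : T -> Prop) : Prop :=
  maximal_chain C /\ (forall D, chain D -> ~ card_lt C D).

Definition full_trunk (R : T -> Prop) : Prop :=
  trunk R /\ exists C, maximum_chain C /\ subset C R.

Definition maximal_full_trunk (R : T -> Prop) : Prop :=
  full_trunk R /\ (forall S, full_trunk S -> subset R S -> subset S R).

Definition rel_max_full_trunk (R : T -> Prop) : Prop :=
  maximal_full_trunk R /\ (forall S, maximal_full_trunk S -> same_set S R).

Definition union_max_chains (x : T) : Prop :=
  exists C, maximum_chain C /\ C x.

End Orders.

(* Main.v *)
Require Import Defs.
From Stdlib Require Import Classical ClassicalEpsilon ProofIrrelevance FunctionalExtensionality PropExtensionality.

Definition sub {T} (A B : T -> Prop) := forall x, A x -> B x.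

Lemma sub_eq {T} (A B : T -> Prop) : sub A B -> sub B A -> A = B.
Proof.
  intros H1 H2; apply functional_extensionality; intros x;
  apply propositional_extensionality; split; auto.
Qed.

Inductive tower {T} (A0 : T -> Prop) (g : (T->Prop) -> (T->Prop)) : (T -> Prop) -> Prop :=
| t_next X : tower A0 g X -> tower A0 g (g X)
| t_union (S : (T->Prop)->Prop) : (forall X, S X -> tower A0 g X) ->
    tower A0 g (fun x => A0 x \/ exists X, S X /\ X x).

Lemma tower_A0 {T} A0 g (Hg : forall X : T -> Prop, sub X (g X)) X :
  tower A0 g X -> sub A0 X.
Proof. induction 1; intros x Hx; auto. apply Hg; auto. Qed.

Definition normal {T} A0 g (C : T -> Prop) :=
  forall Y, tower A0 g Y -> sub Y C -> ~ sub C Y -> sub (g Y) C.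

Lemma lemma1 {T} A0 g (Hg : forall X : T -> Prop, sub X (g X)) C :
  tower A0 g C -> normal A0 g C -> forall Y, tower A0 g Y -> sub Y C \/ sub (g C) Y.
Proof.
  intros HC HN Y HY. induction HY as [Y' HY' IH | S HS IH].
  - destruct IH as [H|H].
    + destruct (classic (sub C Y')) as [H2|H2].
      * right. rewrite (sub_eq _ _ H H2). intros x Hx; exact Hx.
      * left. apply HN; auto.
    + right. intros x Hx. apply Hg. auto.
  - destruct (classic (exists Z, S Z /\ sub (g C) Z)) as [[Z [HZ H]]|H].
    + right. intros x Hx. right. exists Z. auto.
    + left. intros x [Hx|[Z [HZ Hx]]].
      * eapply tower_A0; eauto.
      * destruct (IH Z HZ) as [H1|H1]; auto. exfalso; eauto.
Qed.

Lemma all_normal {T} A0 g (Hg : forall X : T -> Prop, sub X (g X)) C :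
  tower A0 g C -> normal A0 g C.
Proof.
  induction 1 as [C' HC' IH | S HS IH]; intros Y HY H1 H2.
  - destruct (lemma1 A0 g Hg C' HC' IH Y HY) as [H|H].
    + destruct (classic (sub C' Y)) as [H3|H3].
      * rewrite (sub_eq _ _ H H3). intros x Hx; exact Hx.
      * intros x Hx. apply Hg. exact (IH Y HY H H3 x Hx).
    + exfalso. apply H2. exact H.
  - destruct (classic (exists Z, S Z /\ sub Y Z)) as [[Z [HZ HYZ]]|H].
    + destruct (classic (sub Z Y)) as [HZY|HZY].
      * rewrite (sub_eq _ _ HYZ HZY).
        destruct (classic (exists x, (A0 x \/ exists X, S X /\ X x) /\ ~ Z x)) as [[x [Hx Hnx]]|Hn].
        -- destruct Hx as [Hx|[Z' [HZ' Hx]]].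
           ++ exfalso. apply Hnx. eapply tower_A0; eauto.
           ++ destruct (lemma1 A0 g Hg Z (HS Z HZ) (IH Z HZ) Z' (HS Z' HZ')) as [H|H].
              ** exfalso; auto.
              ** intros y Hy. right. exists Z'. auto.
        -- exfalso. apply H2. intros x Hx. apply HZY.
           apply NNPP. intros Hc. apply Hn. exists x. split; auto.
      * intros x Hx. right. exists Z. split; auto. exact (IH Z HZ Y HY HYZ HZY x Hx).
    + exfalso. apply H2. intros x [Hx|[Z [HZ Hx]]].
      * eapply tower_A0; eauto.
      * destruct (lemma1 A0 g Hg Z (HS Z HZ) (IH Z HZ) Y HY) as [H3|H3].
        -- exfalso; eauto.
        -- apply H3. apply Hg. exact Hx.
Qed.

Lemma tower_chain {T} A0 g (Hg : forall X : T -> Prop, sub X (g X)) X Y :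
  tower A0 g X -> tower A0 g Y -> sub X Y \/ sub Y X.
Proof.
  intros HX HY. destruct (lemma1 A0 g Hg X HX (all_normal A0 g Hg X HX) Y HY) as [H|H]; auto.
  left. intros x Hx. apply H, Hg, Hx.
Qed.

Lemma tukey {T} (F : (T->Prop)->Prop) (A0 : T->Prop) : F A0 ->
  (forall S, (forall X, S X -> F X) -> (forall X Y, S X -> S Y -> sub X Y \/ sub Y X) ->
     (forall X, S X -> sub A0 X) -> F (fun x => A0 x \/ exists X, S X /\ X x)) ->
  exists M, F M /\ sub A0 M /\ forall Y, F Y -> sub M Y -> sub Y M.
Proof.
  intros H0 HU.
  set (g := fun X : T -> Prop =>
     match excluded_middle_informative (exists Y, F Y /\ sub X Y /\ ~ sub Y X) with
     | left e => proj1_sig (constructive_indefinite_description _ e)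
     | right _ => X end).
  assert (Hg : forall X, sub X (g X) /\ (F X -> F (g X))).
  { intros X. unfold g. destruct excluded_middle_informative as [e|e].
    - destruct (constructive_indefinite_description _ e) as [Y [HY1 [HY2 HY3]]]; simpl; auto.
    - split; auto. intros x Hx; exact Hx. }
  assert (Hg1 : forall X, sub X (g X)) by (intros; apply Hg).
  assert (HF : forall X, tower A0 g X -> F X).
  { induction 1 as [X HX IH | S HS IH].
    - apply Hg; auto.
    - apply HU; auto.
      + intros; apply tower_chain with (A0 := A0) (g := g); auto.
      + intros; eapply tower_A0; eauto. }
  set (U := fun x => A0 x \/ exists X, tower A0 g X /\ X x).
  assert (HTU : tower A0 g U) by (apply t_union; auto).
  exists U. split; [apply HF; auto|]. split; [intros x Hx; left; auto|].
  intros Y HY HUY. apply NNPP; intros Hn.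
  assert (Hsub : sub (g U) U).
  { intros x Hx. right. exists (g U). split; auto. apply t_next; auto. }
  revert Hsub. unfold g at 1. destruct excluded_middle_informative as [e|e].
  - destruct (constructive_indefinite_description _ e) as [Y' [HY1 [HY2 HY3]]]; simpl; auto.
  - exfalso. apply e. exists Y. auto.
Qed.

Lemma card_le_trans {T} (A B C : T -> Prop) :
  card_le A B -> card_le B C -> card_le A C.
Proof.
  intros [f Hf] [g Hg]. exists (fun a => g (f a)). auto.
Qed.

Lemma fam_chain_pick {T} (A0 : T -> Prop) (S : (T->Prop)->Prop)
  (Hc : forall X Y, S X -> S Y -> sub X Y \/ sub Y X) (HA : forall X, S X -> sub A0 X)
  W1 W2 : (W1 = A0 \/ S W1) -> (W2 = A0 \/ S W2) ->
  exists W, (W = A0 \/ S W) /\ sub W1 W /\ sub W2 W.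
Proof.
  intros [->|H1] [->|H2].
  - exists A0; split; auto; split; intros x Hx; auto.
  - exists W2; split; auto; split; [apply HA; auto| intros x Hx; auto].
  - exists W1; split; auto; split; [intros x Hx; auto|apply HA; auto].
  - destruct (Hc _ _ H1 H2) as [H|H].
    + exists W2; split; auto; split; auto; intros x Hx; auto.
    + exists W1; split; auto; split; auto; intros x Hx; auto.
Qed.

Lemma union_mem {T} (A0 : T -> Prop) (S : (T->Prop)->Prop) x :
  (A0 x \/ exists X, S X /\ X x) -> exists W, (W = A0 \/ S W) /\ W x.
Proof. intros [H|[X [H1 H2]]]; [exists A0|exists X]; auto. Qed.

Lemma ext_chain {T} (le : T -> T -> Prop) D : chain le D ->
  exists M, maximal_chain le M /\ subset D M.
Proof.
  intros HD.
  destruct (tukey (chain le) D HD) as [M [HM1 [HM2 HM3]]].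
  - intros S HS Hc HA x y Hx Hy.
    destruct (union_mem _ _ _ Hx) as [W1 [HW1 Hx1]].
    destruct (union_mem _ _ _ Hy) as [W2 [HW2 Hy2]].
    destruct (fam_chain_pick D S Hc HA W1 W2 HW1 HW2) as [W [HW [H1 H2]]].
    assert (chain le W) by (destruct HW as [->|HW]; auto).
    auto.
  - exists M. split; [split|]; auto.
Qed.

Lemma ext_trunk {T} (le : T -> T -> Prop) S0 : full_trunk le S0 ->
  exists R, maximal_full_trunk le R /\ subset S0 R.
Proof.
  intros HD.
  destruct (tukey (full_trunk le) S0 HD) as [M [HM1 [HM2 HM3]]].
  - intros S HS Hc HA. split.
    + intros x y z Hx Hy Hz.
      destruct (union_mem _ _ _ Hx) as [W1 [HW1 Hx1]].
      destruct (union_mem _ _ _ Hy) as [W2 [HW2 Hy2]].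
      destruct (union_mem _ _ _ Hz) as [W3 [HW3 Hz3]].
      destruct (fam_chain_pick S0 S Hc HA W1 W2 HW1 HW2) as [W [HW [H1 H2]]].
      destruct (fam_chain_pick S0 S Hc HA W W3 HW HW3) as [W' [HW' [H1' H2']]].
      assert (full_trunk le W') by (destruct HW' as [->|HW']; auto).
      destruct H as [Ht _]. apply Ht; auto.
    + destruct HD as [_ [C [HC1 HC2]]]. exists C. split; auto.
      intros x Hx; left; auto.
  - exists M. split; [split|]; auto.
Qed.

Lemma key {T} (le : T -> T -> Prop) R x : is_order le -> full_trunk le R -> R x ->
  union_max_chains le x.
Proof.
  intros [Hrefl _] [Ht [C [[[HC1 HC2] HC3] HCR]]] Hx.
  destruct (classic (C x)) as [Hcx|Hcx]; [exists C; repeat split; auto|].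
  destruct (classic (exists c, C c /\ ~ (le x c \/ le c x))) as [[c [Hc Hnc]]|Hn].
  2:{ exfalso. apply Hcx.
      apply (HC2 (fun y => C y \/ y = x)).
      - intros a b [Ha| ->] [Hb| ->]; auto.
        + apply NNPP; intros Hab. apply Hn. exists a. split; auto. tauto.
        + apply NNPP; intros Hab. apply Hn. exists b. split; auto.
      - intros y Hy; auto.
      - auto. }
  assert (Hxc : x <> c) by (intros ->; auto).
  set (C' := fun y => (C y /\ y <> c) \/ y = x).
  assert (HC' : chain le C').
  { assert (Hd : forall d, C d -> d <> c -> le d x \/ le x d).
    { intros d Hd Hdc. apply NNPP; intros Hnd.
      assert (Hi : incomp le c d).
      { apply (Ht c x d); auto.
        - intros ->; auto.
        - split; auto.
        - split; [intros ->; auto|tauto]. }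
      destruct Hi as [_ [Hi1 Hi2]]. destruct (HC1 c d Hc Hd); auto. }
    intros a b [[Ha Hac]| ->] [[Hb Hbc]| ->]; auto.
    destruct (Hd b Hb Hbc); auto. }
  destruct (ext_chain le C' HC') as [M [HM HC'M]].
  exists M. split; [|apply HC'M; right; auto].
  split; auto.
  assert (HCM : card_le C M).
  { exists (fun a : {y | C y} =>
      match excluded_middle_informative (proj1_sig a = c) with
      | left _ => exist _ x (HC'M x (or_intror eq_refl))
      | right n => exist _ (proj1_sig a) (HC'M _ (or_introl (conj (proj2_sig a) n)))
      end).
    intros [a Ha] [b Hb]; simpl.
    destruct excluded_middle_informative as [e1|e1];
    destruct excluded_middle_informative as [e2|e2]; intros E; inversion E; subst.
    - f_equal. apply proof_irrelevance.
    - exfalso; auto.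
    - exfalso; auto.
    - f_equal. apply proof_irrelevance. }
  intros D HD [H1 H2]. apply (HC3 D HD). split.
  - eapply card_le_trans; eauto.
  - intros H3. apply H2. eapply card_le_trans; eauto.
Qed.

Lemma chain_full_trunk {T} (le : T -> T -> Prop) C : maximum_chain le C -> full_trunk le C.
Proof.
  intros HC. split.
  - intros x y z Hx Hy Hz _ _ _ [_ [H1 H2]]. destruct HC as [[Hc _] _].
    destruct (Hc x y); tauto.
  - exists C; split; auto. intros x Hx; auto.
Qed.

Theorem corollary5p7 (T : Type) (le : T -> T -> Prop) :
  is_order le ->
  (exists C, maximum_chain le C) ->
  (forall R, rel_max_full_trunk le R -> same_set R (union_max_chains le)) /\
  ((exists R, rel_max_full_trunk le R) <-> trunk le (union_max_chains le)).
Proof.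
  intros Ho [C0 HC0].
  assert (P1 : forall R, rel_max_full_trunk le R -> same_set R (union_max_chains le)).
  { intros R [[HR1 HR2] HR3] x. split.
    - intros Hx. eapply key; eauto.
    - intros [C [HC Hx]].
      destruct (ext_trunk le C (chain_full_trunk le C HC)) as [S [HS HCS]].
      apply (HR3 S HS). auto. }
  split; auto. split.
  - intros [R HR]. pose proof (P1 R HR) as E.
    destruct HR as [[[Ht _] _] _].
    intros x y z Hx Hy Hz. apply E in Hx. apply E in Hy. apply E in Hz. apply Ht; auto.
  - intros HU.
    assert (HF : full_trunk le (union_max_chains le)).
    { split; auto. exists C0. split; auto. intros x Hx. exists C0; auto. }
    exists (union_max_chains le). split.
    + split; auto. intros S HS _ x Hx. eapply key; eauto.
    + intros S [HS1 HS2] x. split.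
      * intros Hx. eapply key; eauto.
      * intros Hx. apply (HS2 _ HF); auto. intros y Hy. eapply key; eauto.
Qed.
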